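(* For every $\mathsf{UCQ}^{\neq}$ $\tilde q$ (a Boolean union of conjunctive queries possibly containing inequality atoms $x\neq y$) and every $k\in\mathbb{N}$, there exists a finite set $\mathcal{Q}^{\neq}$ of $\mathsf{CQ}^{\neq}$ queries, together with rational numbers $\gamma_q$ ($q\in\mathcal{Q}^{\neq}$) computable from $q$ (one may take $\gamma_q=1/|\mathrm{Aut}(q)|$, where $\mathrm{Aut}(q)$ is the set of homomorphisms from $q$ to itself), such that for every database $\mathcal{D}$: $$\#\mathrm{FMS}_{\tilde q}(k,\mathcal{D})=\sum_{q\in\mathcal{Q}^{\neq}}\#\mathrm{Hom}_q(\mathcal{D})\cdot\gamma_q,$$ where $\#\mathrm{Hom}_q(\mathcal{D})$ is the number of homomorphisms from $q$ to $\mathcal{D}$. Moreover, every $q\in\mathcal{Q}^{\neq}$ has size at most quadratic in the size of $\tilde q$.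
   Context: A database is a finite set of facts $P(\vec a)$ over constants. A homomorphism from a $\mathsf{CQ}^{\neq}$ $q$ (a conjunction of relational atoms and inequality atoms over variables and constants, all variables existentially quantified) to $\mathcal{D}$ is a map $h$ from the terms of $q$ to constants, the identity on constants, such that $P(h(\vec x))\in\mathcal{D}$ for every relational atom $P(\vec x)$ of $q$ and $h(x)\neq h(y)$ for every inequality atom $x\neq y$; homomorphisms between queries are defined analogously. $\mathcal{D}\models\tilde q$ if some disjunct of $\tilde q$ has a homomorphism to $\mathcal{D}$. A minimal support of $\tilde q$ in $\mathcal{D}$ is an inclusion-minimal $S\subseteq\mathcal{D}$ with $S\models\tilde q$; $\#\mathrm{FMS}_{\tilde q}(k,\mathcal{D})$ is the number of minimal supports of $\tilde q$ in $\mathcal{D}$ of cardinality exactly $k$. *)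

(* Defs.v *)
From HB Require Import structures.
From mathcomp Require Import all_boot all_order all_algebra.
From mathcomp Require Import finmap.
From mathcomp Require Import boolp.

Set Implicit Arguments.
Unset Strict Implicit.
Unset Printing Implicit Defensive.

Local Open Scope fset_scope.

Definition term := (nat + nat)%type.
Definition TVar (x : nat) : term := inl x.
Definition TCst (c : nat) : term := inr c.

(* A relational atom P(t_1,...,t_n): relation symbol (a nat) and term tuple. *)
Definition ratom := (nat * seq term)%type.
(* An inequality atom t1 <> t2. *)
Definition natom := (term * term)%type.

(* A CQ^{neq}: a conjunction of relational atoms and inequality atoms, all
   variables existentially quantified (Boolean query). *)
Definition cq := (seq ratom * seq natom)%type.
Definition ratoms (q : cq) : seq ratom := q.1.
Definition natoms (q : cq) : seq natom := q.2.

(* A UCQ^{neq}: a finite disjunction of CQ^{neq}s. *)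
Definition ucq := seq cq.

(* A fact P(a_1,...,a_n) over constants, and a database = finite set of facts. *)
Definition fact := (nat * seq nat)%type.
Definition database := {fset fact}.

Definition tvars (t : term) : seq nat :=
  match t with inl x => [:: x] | inr _ => [::] end.
Definition vars (q : cq) : seq nat :=
  undup (flatten [seq flatten (map tvars a.2) | a <- ratoms q]
         ++ flatten [seq tvars p.1 ++ tvars p.2 | p <- natoms q]).

Definition tcsts (t : term) : seq nat :=
  match t with inl _ => [::] | inr c => [:: c] end.
Definition csts (q : cq) : seq nat :=
  undup (flatten [seq flatten (map tcsts a.2) | a <- ratoms q]
         ++ flatten [seq tcsts p.1 ++ tcsts p.2 | p <- natoms q]).

Definition terms (q : cq) : seq term := map TVar (vars q) ++ map TCst (csts q).

Definition tmap (T : Type) (emb : nat -> T) (h : nat -> T) (t : term) : T :=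
  match t with inl x => h x | inr c => emb c end.

Definition is_hom (T : eqType) (emb : nat -> T) (tgt : pred (nat * seq T))
    (h : nat -> T) (q : cq) : bool :=
  all (fun a => tgt (a.1, map (tmap emb h) a.2)) (ratoms q)
  && all (fun p => tmap emb h p.1 != tmap emb h p.2) (natoms q).

Definition hom_db (h : nat -> nat) (q : cq) (D : database) : bool :=
  @is_hom nat id (fun f => f \in D) h q.

Definition hom_q (h : nat -> term) (q q' : cq) : bool :=
  @is_hom _ TCst (fun a => a \in ratoms q') h q.

Definition models (D : database) (Q : ucq) : Prop :=
  exists2 q, q \in Q & exists h : nat -> nat, hom_db h q D.

Definition min_support (Q : ucq) (D S : database) : Prop :=
  [/\ S `<=` D, models S Q & forall S', S' `<` S -> ~ models S' Q].

Definition FMS (Q : ucq) (k : nat) (D : database) : nat :=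
  #|` [fset S in fpowerset D | `[< min_support Q D S >] && (#|` S| == k)] |.

Fixpoint tuples (T : Type) (A : seq T) (n : nat) : seq (seq T) :=
  match n with
  | 0 => [:: [::]]
  | n'.+1 => [seq x :: l | x <- A, l <- tuples A n']
  end.

Definition of_list (T : Type) (d : T) (q : cq) (l : seq T) : nat -> T :=
  fun x => nth d l (index x (vars q)).

Definition adom (D : database) : seq nat :=
  undup (flatten [seq f.2 | f <- enum_fset D]).

(* A query is safe if each of its variables occurs in a relational atom;
   then every homomorphism into D maps variables into adom D and every
   endomorphism maps variables into terms q, so the counts below are the
   numbers of all homomorphisms (homomorphisms being determined by their
   values on the variables). *)
Definition safe (q : cq) : bool :=
  all (fun x => x \in flatten [seq flatten (map tvars a.2) | a <- ratoms q])
      (vars q).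

Definition hom_count (q : cq) (D : database) : nat :=
  count (fun l => hom_db (of_list 0 q l) q D) (tuples (adom D) (size (vars q))).

Definition aut_count (q : cq) : nat :=
  count (fun l => hom_q (of_list (TCst 0) q l) q q)
        (tuples (terms q) (size (vars q))).

(* Size of a CQ: for each relational atom, 1 + its arity; for each
   inequality atom, 3 (one symbol and two terms). *)
Definition cq_size (q : cq) : nat :=
  \sum_(a <- ratoms q) (size a.2).+1 + 3 * size (natoms q).

Definition ucq_size (Q : ucq) : nat := \sum_(q <- Q) cq_size q.

(* Main.v *)
Require Import Defs.
From mathcomp Require Import all_boot all_order all_algebra.
From mathcomp Require Import finmap boolp zify.
Set Implicit Arguments. Unset Strict Implicit. Unset Printing Implicit Defensive.
Local Open Scope fset_scope.

Lemma mem_tuples (T : eqType) (A : seq T) n l :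
  (l \in tuples A n) = (size l == n) && all (mem A) l.
Proof.
elim: n l => [|n IH] [|x l] //=.
  by apply/negbTE/allpairsP => -[[y l'] /= [_ _ ]].
apply/allpairsP/idP => [[[y l'] /= [Hy Hl [-> ->]]]|/and3P[Hs Hx Hl]].
  by move: Hl; rewrite IH eqSS => /andP[-> ->]; rewrite Hy.
by exists (x, l) => /=; rewrite IH -eqSS Hs Hl Hx.
Qed.

Lemma uniq_tuples (T : eqType) (A : seq T) n : uniq A -> uniq (tuples A n).
Proof.
move=> uA; elim: n => [|n IH] //=.
apply: allpairs_uniq => //.
by move=> [x l] [y l'] _ _ /= [-> ->].
Qed.


Lemma uniq_vars q : uniq (vars q). Proof. exact: undup_uniq. Qed.

Lemma of_list_map (T : Type) (d : T) q f x : x \in vars q ->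
  of_list d q (map f (vars q)) x = f x.
Proof.
move=> xV; rewrite /of_list (nth_map x) ?index_mem // nth_index //.
Qed.

Lemma map_of_list (T : Type) (d : T) q l : size l = size (vars q) ->
  map (of_list d q l) (vars q) = l.
Proof.
move=> sl; apply: (@eq_from_nth _ d); first by rewrite size_map sl.
move=> i; rewrite size_map => iV.
by rewrite (nth_map 0) // /of_list index_uniq // uniq_vars.
Qed.

Lemma mem_tvars x t : (x \in tvars t) = (t == TVar x).
Proof. by case: t => [y|c] //=; rewrite inE /TVar; apply/eqP/eqP => [->|[->]]. Qed.

Lemma var_in_vars q a x : a \in ratoms q -> TVar x \in a.2 -> x \in vars q.
Proof.
move=> aq xa; rewrite /vars mem_undup mem_cat; apply/orP; left.
apply/flatten_mapP; exists a => //; apply/flatten_mapP; exists (TVar x) => //.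
by rewrite mem_tvars.
Qed.

Lemma var_in_vars_n q p x : p \in natoms q -> (p.1 == TVar x) || (p.2 == TVar x) ->
  x \in vars q.
Proof.
move=> pq xp; rewrite /vars mem_undup mem_cat; apply/orP; right.
by apply/flatten_mapP; exists p => //; rewrite mem_cat !mem_tvars.
Qed.

Lemma tmap_ext (T : Type) (emb : nat -> T) h h' (t : term) :
  (forall x, t = TVar x -> h x = h' x) -> tmap emb h t = tmap emb h' t.
Proof. by case: t => [x|c] //= H; apply: H. Qed.

Lemma is_hom_ext (T : eqType) emb tgt (h h' : nat -> T) q :
  {in vars q, h =1 h'} -> is_hom emb tgt h q = is_hom emb tgt h' q.
Proof.
move=> E; rewrite /is_hom; congr andb.
  apply: eq_in_all => a aq /=; congr (tgt (_, _)); apply/eq_in_map => t ta.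
  by apply: tmap_ext => x tx; apply: E; apply: (var_in_vars aq); rewrite -tx.
apply: eq_in_all => p pq /=; congr negb; congr eq_op; apply: tmap_ext => x tx;
  apply: E; apply: (var_in_vars_n pq); by rewrite tx eqxx ?orbT.
Qed.

Definition inst (h : nat -> nat) (a : ratom) : fact := (a.1, map (tmap id h) a.2).
Definition img (h : nat -> nat) (q : cq) : database := [fset x in map (inst h) (ratoms q)].
Definition good (T : eqType) (emb : nat -> T) (h : nat -> T) (q : cq) :=
  all (fun p => tmap emb h p.1 != tmap emb h p.2) (natoms q).

Lemma in_img h q f : (f \in img h q) = (f \in map (inst h) (ratoms q)).
Proof. by rewrite /img in_fset. Qed.

Lemma hom_dbE h q D : hom_db h q D = (img h q `<=` D) && good id h q.
Proof.
rewrite /hom_db /is_hom; congr andb.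
apply/allP/fsubsetP => [H f|H a aq]; first by rewrite in_img => /mapP[a aq ->]; apply: H.
by apply: H; rewrite in_img; apply: map_f.
Qed.

Lemma img_ext h h' q : {in vars q, h =1 h'} -> img h q = img h' q.
Proof.
move=> E; apply/fsetP => f; rewrite !in_img; congr (_ \in _).
apply/eq_in_map => a aq; rewrite /inst; congr (_, _); apply/eq_in_map => t ta.
by apply: tmap_ext => x tx; apply: E; apply: (var_in_vars aq); rewrite -tx.
Qed.

Lemma good_ext (T : eqType) emb (h h' : nat -> T) q :
  {in vars q, h =1 h'} -> good emb h q = good emb h' q.
Proof.
move=> E; apply: eq_in_all => p pq /=; congr negb; congr eq_op; apply: tmap_ext => x tx;
  apply: E; apply: (var_in_vars_n pq); by rewrite tx eqxx ?orbT.
Qed.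


Definition cU (Qt : ucq) : seq nat := flatten (map csts Qt).
Definition gf (g : nat -> nat) (f : fact) : fact := (f.1, map g f.2).
Definition rn (g : nat -> nat) (S : database) : database := [fset x in map (gf g) S].
Definition msup (Qt : ucq) (S : database) :=
  models S Qt /\ forall S', S' `<` S -> ~ models S' Qt.

Lemma mem_tcsts c t : (c \in tcsts t) = (t == TCst c).
Proof. by case: t => [y|d] //=; rewrite inE /TCst; apply/eqP/eqP => [->|[->]]. Qed.

Lemma cst_in_cU Qt q a c : q \in Qt -> a \in ratoms q -> TCst c \in a.2 -> c \in cU Qt.
Proof.
move=> qQ aq ca; apply/flatten_mapP; exists q => //.
rewrite /csts mem_undup mem_cat; apply/orP; left.
apply/flatten_mapP; exists a => //; apply/flatten_mapP; exists (TCst c) => //.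
by rewrite mem_tcsts.
Qed.

Lemma cst_in_cU_n Qt q p c : q \in Qt -> p \in natoms q ->
  (p.1 == TCst c) || (p.2 == TCst c) -> c \in cU Qt.
Proof.
move=> qQ pq cp; apply/flatten_mapP; exists q => //.
rewrite /csts mem_undup mem_cat; apply/orP; right.
by apply/flatten_mapP; exists p => //; rewrite mem_cat !mem_tcsts.
Qed.

Lemma in_rn g S f : (f \in rn g S) = (f \in map (gf g) S).
Proof. by rewrite /rn in_fset. Qed.

Lemma rnK g g' S : cancel g g' -> rn g' (rn g S) = S.
Proof.
move=> K; apply/fsetP => f; rewrite !in_rn; apply/idP/idP.
  case/mapP=> f'; rewrite in_rn => /mapP[f'' f''S ->] ->.
  by rewrite /gf /= mapK //; case: f'' f''S.
move=> fS; apply/mapP; exists (gf g f); first by rewrite in_rn map_f.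
by rewrite /gf /= mapK //; case: f {fS}.
Qed.

Lemma rnS g S1 S2 : S1 `<=` S2 -> rn g S1 `<=` rn g S2.
Proof.
move=> /fsubsetP H; apply/fsubsetP => f; rewrite !in_rn => /mapP[f' f'S ->].
by rewrite map_f // H.
Qed.

Lemma models_rn Qt g g' S : cancel g g' -> {in cU Qt, g =1 id} ->
  models S Qt -> models (rn g S) Qt.
Proof.
move=> K gid [q qQ [h]]; rewrite /hom_db /is_hom => /andP[Ha Hn].
exists q => //; exists (fun x => g (h x)); rewrite /hom_db /is_hom; apply/andP; split.
  apply/allP => a aq /=; rewrite in_rn.
  have -> : map (tmap id (fun x => g (h x))) a.2 = map g (map (tmap id h) a.2).
    rewrite -map_comp; apply/eq_in_map => t ta; case: t ta => [x|c] //= ca.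
    by rewrite gid //; apply: (cst_in_cU qQ aq).
  by apply: (map_f (gf g) (allP Ha a aq)).
apply/allP => p pq /=.
have E : forall t, (t == p.1) || (t == p.2) -> tmap id (fun x => g (h x)) t = g (tmap id h t).
  case=> [x|c] //= ct; rewrite gid //; apply: (cst_in_cU_n qQ pq).
  by case/orP: ct => /eqP <-; rewrite eqxx ?orbT.
rewrite !E ?eqxx ?orbT // (inj_eq (can_inj K)).
exact: (allP Hn p pq).
Qed.

Lemma msup_rn Qt g g' S : cancel g g' -> cancel g' g -> {in cU Qt, g =1 id} ->
  msup Qt S -> msup Qt (rn g S).
Proof.
move=> K K' gid [mS minS]; split; first exact: (models_rn K gid).
have g'id : {in cU Qt, g' =1 id} by move=> c cU; rewrite -{1}(gid c cU) K.
move=> S' ltS' mS'; apply: (minS (rn g' S')); last exact: (models_rn K' g'id).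
rewrite fproperEneq; apply/andP; split.
  apply/eqP => E; move: ltS'; by rewrite -E rnK // fproperEneq eqxx.
by rewrite -(rnK S K); apply: rnS; apply: fproper_sub.
Qed.


Definition sw (a b : seq nat) (n : nat) : nat :=
  if n \in a then nth 0 b (index n a) else if n \in b then nth 0 a (index n b) else n.

Lemma swK a b : uniq a -> uniq b -> size a = size b ->
  (forall x, x \in a -> x \notin b) -> involutive (sw a b).
Proof.
move=> ua ub sab dis n.
case na: (n \in a).
  have nb : nth 0 b (index n a) \in b by apply: mem_nth; rewrite -sab index_mem na.
  have nb' : (nth 0 b (index n a) \in a) = false.
    by apply/negbTE/negP => /dis; rewrite nb.
  by rewrite [sw a b n]/sw na /sw nb' nb index_uniq ?nth_index // -sab index_mem.
case nb: (n \in b); last by rewrite [sw a b n]/sw na nb /sw na nb.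
have na' : nth 0 a (index n b) \in a by apply: mem_nth; rewrite sab index_mem.
by rewrite [sw a b n]/sw na nb /sw na' index_uniq ?nth_index // sab index_mem.
Qed.

Lemma sw_nth a b i : uniq a -> i < size a -> sw a b (nth 0 a i) = nth 0 b i.
Proof. by move=> ua ia; rewrite /sw mem_nth // index_uniq. Qed.

Lemma sw_out a b n : n \notin a -> n \notin b -> sw a b n = n.
Proof. by rewrite /sw => /negbTE -> /negbTE ->. Qed.

Lemma transfer (V cs : seq nat) (h1 h2 : nat -> nat) : uniq V ->
  {in V &, injective h1} -> {in V &, injective h2} ->
  {in V, forall x, h1 x \notin cs} -> {in V, forall x, h2 x \notin cs} ->
  exists g g', [/\ cancel g g', cancel g' g, {in cs, g =1 id} &
                 {in V, forall x, g (h1 x) = h2 x}].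
Proof.
move=> uV i1 i2 c1 c2.
set A := map h1 V; set C := map h2 V.
set N := (\max_(x <- A ++ C ++ cs) x).+1.
set B := iota N (size V).
have ltN : forall x, x \in A ++ C ++ cs -> x < N.
  by move=> x xin; rewrite ltnS (leq_bigmax_seq x xin).
have uA : uniq A by rewrite map_inj_in_uniq.
have uC : uniq C by rewrite map_inj_in_uniq.
have uB : uniq B by apply: iota_uniq.
have inB : forall x, x \in B -> N <= x by move=> x; rewrite mem_iota => /andP[].
have dAB : forall x, x \in A -> x \notin B.
  move=> x xA; apply/negP => /inB; rewrite leqNgt ltN //.
  by rewrite mem_cat xA.
have dBC : forall x, x \in B -> x \notin C.
  move=> x /inB; apply: contraTN => xC; rewrite -ltnNge ltN //.
  by rewrite !mem_cat xC orbT.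
have sAB : size A = size B by rewrite size_map size_iota.
have sBC : size B = size C by rewrite size_map size_iota.
have K1 := swK uA uB sAB dAB.
have K2 := swK uB uC sBC dBC.
exists (fun n => sw B C (sw A B n)), (fun n => sw A B (sw B C n)); split.
- by move=> n; rewrite K2 K1.
- by move=> n; rewrite K1 K2.
- move=> c ccs.
  have cA : c \notin A by apply/mapP => -[x xV cx]; move: (c1 x xV); rewrite -cx ccs.
  have cC : c \notin C by apply/mapP => -[x xV cx]; move: (c2 x xV); rewrite -cx ccs.
  have cB : c \notin B by apply/negP => /inB; rewrite leqNgt ltN // !mem_cat ccs !orbT.
  by rewrite (sw_out cA cB) (sw_out cB cC).
- move=> x xV.
  have -> : h1 x = nth 0 A (index x V) by rewrite (nth_map 0) ?index_mem ?nth_index.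
  rewrite sw_nth ?size_map ?index_mem // sw_nth ?size_iota ?index_mem //.
  by rewrite (nth_map 0) ?index_mem ?nth_index.
Qed.


Definition okt (V cs : seq nat) (t : term) : bool :=
  match t with inl x => x \in V | inr c => c \in cs end.

Definition shape (cs : seq nat) (q : cq) : Prop :=
  [/\ uniq (ratoms q),
      forall a, a \in ratoms q -> all (okt (vars q) cs) a.2,
      (forall (T : eqType) (emb : nat -> T) h, good emb h q <->
         {in vars q &, injective h} /\ {in vars q, forall x c, c \in cs -> h x != emb c}),
      (forall x, x \in vars q -> exists2 a, a \in ratoms q & TVar x \in a.2) &
      {subset csts q <= cs}].

Lemma map_inj_eq (A B : eqType) (P : pred A) (f : A -> B) s1 s2 :
  {in P &, injective f} -> all P s1 -> all P s2 -> map f s1 = map f s2 -> s1 = s2.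
Proof.
move=> inj; elim: s1 s2 => [|x s1 IH] [|y s2] //= /andP[Px P1] /andP[Py P2] [fxy E].
by rewrite (inj x y) // (IH s2).
Qed.

Lemma tmap_inj V cs (h : nat -> nat) : {in V &, injective h} ->
  {in V, forall x, h x \notin cs} -> {in okt V cs &, injective (tmap id h)}.
Proof.
move=> hi ha t1 t2; rewrite !unfold_in; case: t1 => [x|c]; case: t2 => [y|d] /= ox oy E.
- by rewrite (hi x y ox oy E).
- by move: (ha x ox); rewrite E oy.
- by move: (ha y oy); rewrite -E ox.
- by rewrite E.
Qed.

Definition subst (s : nat -> term) (a : ratom) : ratom := (a.1, map (tmap TCst s) a.2).

Lemma inst_subst h s a : inst h (subst s a) = inst (fun x => tmap id h (s x)) a.
Proof.
rewrite /inst /subst /= -map_comp; congr (_, _); apply/eq_map => -[x|c] //.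
Qed.

Lemma good_char cs q h : shape cs q -> good id h q ->
  {in vars q &, injective h} /\ {in vars q, forall x, h x \notin cs}.
Proof.
move=> [_ _ G _ _] /G [hi ha]; split => // x xV; apply/negP => xc.
by move: (ha x xV (h x) xc); rewrite eqxx.
Qed.

Lemma good_of cs q h : shape cs q -> {in vars q &, injective h} ->
  {in vars q, forall x, h x \notin cs} -> good id h q.
Proof.
move=> [_ _ G _ _] hi ha; apply/G; split => // x xV c cc /=.
by apply: contraNneq (ha x xV) => ->.
Qed.

Lemma inst_inj cs q h a b : shape cs q -> good id h q ->
  all (okt (vars q) cs) a.2 -> all (okt (vars q) cs) b.2 -> inst h a = inst h b -> a = b.
Proof.
move=> sh /(good_char sh) [hi ha] oa ob; case: a oa => r ts; case: b ob => r' ts' /= oa ob [-> E].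
by rewrite (map_inj_eq (tmap_inj hi ha) ob oa E).
Qed.

Lemma card_img cs q h : shape cs q -> good id h q -> #|` img h q| = size (ratoms q).
Proof.
move=> sh gh; rewrite /img card_fseq undup_id ?size_map //.
case: (sh) => uq oq _ _ _; rewrite map_inj_in_uniq // => a b aq bq.
by apply: (inst_inj sh gh); apply: oq.
Qed.


Lemma in_adom (D : database) (f : fact) n : f \in D -> n \in f.2 -> n \in adom D.
Proof.
move=> fD nf; rewrite /adom mem_undup; apply/flatten_mapP; exists f => //.
Qed.

Lemma uniq_terms q : uniq (terms q).
Proof.
rewrite /terms cat_uniq !map_inj_uniq ?uniq_vars ?undup_uniq //; last by move=> ? ? [].
  rewrite andbT /=; apply/hasP => -[t /mapP[c _ ->] /mapP[x _]] //.
by move=> ? ? [].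
Qed.

Lemma terms_okt cs q t : shape cs q -> t \in terms q -> okt (vars q) cs t.
Proof.
case=> _ _ _ _ cq; rewrite /terms mem_cat => /orP[] /mapP[x xq ->] /=; first by [].
exact: cq.
Qed.

Lemma of_list_mapt q (h0 : nat -> nat) sg x :
  of_list 0 q (map (tmap id h0) sg) x = tmap id h0 (of_list (TCst 0) q sg x).
Proof.
rewrite /of_list; case: (ltnP (index x (vars q)) (size sg)) => H.
  by rewrite (nth_map (TCst 0)).
by rewrite !nth_default ?size_map.
Qed.

Lemma inst_ext q h h' a : {in vars q, h =1 h'} -> a \in ratoms q -> inst h a = inst h' a.
Proof.
move=> E aq; rewrite /inst; congr (_, _); apply/eq_in_map => t ta.
by apply: tmap_ext => x tx; apply: E; apply: (var_in_vars aq); rewrite -tx.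
Qed.

Lemma img_sub_card (A B : database) : A `<=` B -> #|` B| <= #|` A| -> A = B.
Proof. by move=> AB BA; apply/eqP; rewrite eqEfcard AB BA. Qed.

Lemma fiber_count cs q h0 D S : shape cs q -> good id h0 q -> img h0 q = S -> S `<=` D ->
  count (fun l => hom_db (of_list 0 q l) q D && (img (of_list 0 q l) q == S))
        (tuples (adom D) (size (vars q))) = aut_count q.
Proof.
move=> sh g0 i0 SD.
have [uq oq G saf cq] := sh.
have [h0i h0a] := good_char sh g0.
rewrite /aut_count -!size_filter.
set F := filter _ _; set A := filter _ _.
have uF : uniq F by apply/filter_uniq/uniq_tuples/undup_uniq.
have uA : uniq A by apply/filter_uniq/uniq_tuples/uniq_terms.
have HA : forall sg, sg \in A -> [/\ sg = map (of_list (TCst 0) q sg) (vars q),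
    (forall x, x \in vars q -> exists2 v, v \in vars q & of_list (TCst 0) q sg x = TVar v),
    {in vars q &, injective (of_list (TCst 0) q sg)} &
    (forall a, a \in ratoms q -> subst (of_list (TCst 0) q sg) a \in ratoms q)].
  move=> sg; rewrite mem_filter mem_tuples => /andP[Hh /andP[/eqP ss Hall]].
  set s := of_list (TCst 0) q sg in Hh *.
  move: Hh; rewrite /hom_q /is_hom => /andP[Ha Hg].
  have /G [si sa] : good TCst s q by [].
  have es : sg = map s (vars q) by rewrite map_of_list.
  split => //.
  - move=> x xV; have : s x \in terms q.
      by apply: (allP Hall); rewrite es map_f.
    rewrite /terms mem_cat => /orP[] /mapP[y yV sy]; first by exists y.
    by move: (sa x xV y (cq _ yV)); rewrite sy eqxx.
  - by move=> a aq; apply: (allP Ha a aq).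
have tA : forall sg, sg \in A -> all (okt (vars q) cs) sg.
  move=> sg /HA [es Hv _ _]; rewrite es; apply/allP => t /mapP[x xV ->].
  by have [v vV ->] := Hv x xV.
have le1 : size A <= size F.
  rewrite -(size_map (map (tmap id h0))).
  apply: uniq_leq_size.
    rewrite map_inj_in_uniq // => s1 s2 s1A s2A.
    by apply: map_inj_eq (tmap_inj h0i h0a) (tA _ s1A) (tA _ s2A).
  move=> l /mapP[sg sgA ->].
  have [es Hv si Ha] := HA sg sgA.
  set s := of_list (TCst 0) q sg in es Hv si Ha.
  set hp := fun x => tmap id h0 (s x).
  have ghp : good id hp q.
    apply: (good_of sh).
      move=> x y xV yV; rewrite /hp.
      have [v vV ev] := Hv x xV; have [w wV ew] := Hv y yV.
      rewrite ev ew /= => E; apply: si => //; by rewrite ev ew (h0i v w vV wV E).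
    by move=> x xV; rewrite /hp; have [v vV ->] := Hv x xV; apply: h0a.
  have ihp : img hp q = S.
    rewrite -i0; apply: img_sub_card; last by rewrite (card_img sh ghp) (card_img sh g0).
    apply/fsubsetP => f; rewrite !in_img => /mapP[a aq ->].
    by rewrite -inst_subst map_f // Ha.
  have E : {in vars q, of_list 0 q (map (tmap id h0) sg) =1 hp}.
    by move=> x _; rewrite of_list_mapt.
  have ss : size sg = size (vars q) by rewrite es size_map.
  rewrite mem_filter mem_tuples size_map ss eqxx /=.
  rewrite /hom_db (is_hom_ext _ _ E) -/(hom_db hp q D) hom_dbE (img_ext E) ihp SD ghp eqxx /=.
  apply/allP => y /mapP[t]; rewrite {1}es => /mapP[x xV ->] ->.
  have [v vV ->] := Hv x xV; have [a aq va] := saf v vV.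
  apply: (in_adom (f := inst h0 a)).
    by apply: (fsubsetP SD); rewrite -i0 in_img map_f.
  by rewrite /inst /= (map_f (tmap id h0) va).
set pre := fun y => nth 0 (vars q) (index y (map h0 (vars q))).
have HF : forall l, l \in F -> [/\ l = map (of_list 0 q l) (vars q),
    good id (of_list 0 q l) q, img (of_list 0 q l) q = S &
    forall x, x \in vars q -> of_list 0 q l x \in map h0 (vars q)].
  move=> l; rewrite mem_filter mem_tuples => /andP[/andP[Hh /eqP Hi] /andP[/eqP sl _]].
  set h := of_list 0 q l in Hh Hi *.
  move: Hh; rewrite hom_dbE => /andP[_ gh].
  have [hi ha] := good_char sh gh.
  split => //; first by rewrite map_of_list.
  move=> x xV; have [a aq xa] := saf x xV.
  have : inst h a \in img h0 q by rewrite i0 -Hi in_img map_f.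
  rewrite in_img => /mapP[b bq /(congr1 snd) /= Eab].
  have : h x \in map (tmap id h0) b.2 by rewrite -Eab (map_f (tmap id h) xa).
  case/mapP => -[v|c] tb /= hx.
    by rewrite hx map_f // (var_in_vars bq tb).
  by move: (ha x xV); rewrite hx; have := allP (oq b bq) _ tb; rewrite /= => ->.
have preK : forall y, y \in map h0 (vars q) -> h0 (pre y) = y /\ pre y \in vars q.
  move=> y yin; rewrite /pre; split; last by apply: mem_nth; rewrite -(size_map h0) index_mem.
  by rewrite -(nth_map 0 0) ?nth_index // -(size_map h0) index_mem.
have le2 : size F <= size A.
  rewrite -(size_map (map (fun y => TVar (pre y)))).
  apply: uniq_leq_size.
    rewrite map_inj_in_uniq // => l1 l2 l1F l2F.
    have [e1 _ _ k1] := HF l1 l1F; have [e2 _ _ k2] := HF l2 l2F.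
    rewrite e1 e2 -!map_comp => /eq_in_map E; apply/eq_in_map => x xV.
    move: (E x xV) => /= [Ep].
    by rewrite -(proj1 (preK _ (k1 x xV))) Ep (proj1 (preK _ (k2 x xV))).
  move=> sg /mapP[l lF ->].
  have [el gh ih key] := HF l lF.
  set h := of_list 0 q l in el gh ih key.
  have [hi ha] := good_char sh gh.
  set s' := fun x => TVar (pre (h x)) : term.
  have E : {in vars q, of_list (TCst 0) q (map (fun y => TVar (pre y)) l) =1 s'}.
    by move=> x xV; rewrite {1}el -map_comp of_list_map.
  have sl : size l = size (vars q) by rewrite el size_map.
  rewrite mem_filter mem_tuples size_map sl eqxx /=.
  apply/andP; split.
    rewrite /hom_q (is_hom_ext _ _ E) /is_hom; apply/andP; split.
      apply/allP => a aq /=.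
      have : inst h a \in img h0 q by rewrite i0 -ih in_img map_f.
      rewrite in_img => /mapP[b bq Eb].
      have -> : (a.1, map (tmap TCst s') a.2) = b; last by [].
      apply: (inst_inj sh g0) => //; last first.
        rewrite -/(subst s' a) inst_subst -Eb; apply: inst_ext aq => x xV /=.
        by rewrite (proj1 (preK _ (key x xV))).
        by apply: oq.
      apply/allP => t /mapP[t' t'a ->]; case: t' t'a => [x|c] /= t'a.
        by rewrite (proj2 (preK _ (key x (var_in_vars aq t'a)))).
      by have := allP (oq a aq) _ t'a.
    apply/G; split.
      move=> x y xV yV [Ep]; apply: hi => //.
      by rewrite -(proj1 (preK _ (key x xV))) Ep (proj1 (preK _ (key y yV))).
    by [].
  apply/allP => t /mapP[y]; rewrite {1}el => /mapP[x xV ->] ->.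
  change (TVar (pre (h x)) \in terms q).
  by rewrite /terms mem_cat map_f // (proj2 (preK _ (key x xV))).
by apply: anti_leq; rewrite le1 le2.
Qed.


Lemma aut_pos cs q : shape cs q -> 0 < aut_count q.
Proof.
move=> sh; have [uq oq G saf cq] := sh.
rewrite /aut_count -has_count; apply/hasP; exists (map TVar (vars q)).
  rewrite mem_tuples size_map eqxx /=; apply/allP => t /mapP[x xV ->].
  by change (TVar x \in terms q); rewrite /terms mem_cat map_f.
have E : {in vars q, of_list (TCst 0) q (map TVar (vars q)) =1 TVar}.
  by move=> x xV; rewrite of_list_map.
rewrite /hom_q (is_hom_ext _ _ E) /is_hom; apply/andP; split.
  apply/allP => a aq /=.
  have -> : map (tmap TCst TVar) a.2 = a.2 by rewrite -[RHS]map_id; apply/eq_map => -[].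
  by case: a aq.
apply/G; split; first by move=> x y _ _ [].
by [].
Qed.

Definition Vat (atl : seq ratom) : seq nat := flatten [seq flatten (map tvars a.2) | a <- atl].

Definition mkq (cs : seq nat) (atl : seq ratom) : cq :=
  let V := undup (Vat atl) in
  (atl, [seq (TVar p.1, TVar p.2) | p <- [seq p <- [seq (x, y) | x <- V, y <- V] | p.1 != p.2]]
        ++ [seq (TVar p.1, TCst p.2) | p <- [seq (x, c) | x <- V, c <- cs]]).

Lemma mem_Vat (atl : seq ratom) x : reflect (exists2 a, a \in atl & TVar x \in a.2) (x \in Vat atl).
Proof.
apply: (iffP flatten_mapP) => -[a aa xa]; exists a => //.
  by move: xa => /flatten_mapP[t ta]; rewrite mem_tvars => /eqP <-.
by apply/flatten_mapP; exists (TVar x) => //; rewrite mem_tvars.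
Qed.

Lemma vars_mkq cs atl : vars (mkq cs atl) =i Vat atl.
Proof.
move=> x; rewrite /vars mem_undup mem_cat; apply/orP/idP => [[] //|]; last by left.
case/flatten_mapP => p pq; move: pq; rewrite /natoms /= mem_cat => /orP[] /mapP[[y z]].
  rewrite mem_filter => /andP[_ /allpairsP[[u v] /= [uV vV [-> ->]]]] -> /=.
  by rewrite !inE => /orP[] /eqP ->; rewrite -mem_undup.
move=> /allpairsP[[u v] /= [uV vV [-> ->]]] -> /=.
by rewrite ?cats0 inE => /eqP ->; rewrite -mem_undup.
Qed.

Lemma shape_mkq (cs : seq nat) (atl : seq ratom) : uniq atl ->
  (forall (a : ratom) c, a \in atl -> TCst c \in a.2 -> c \in cs) -> shape cs (mkq cs atl).
Proof.
move=> ua ca; set q := mkq cs atl.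
have VV := vars_mkq cs atl; rewrite -/q in VV.
split => //.
- move=> a aq; apply/allP => -[x|c] ta /=.
    by apply: (var_in_vars aq ta).
  by apply: ca ta.
- move=> T emb h; rewrite /good all_cat; split.
    case/andP => /allP H1 /allP H2; split.
      move=> x y; rewrite !VV => xV yV E; apply/eqP/negPn/negP => nxy.
      have /= H := H1 (TVar x, TVar y).
      suff : h x != h y by rewrite E eqxx.
      apply: H.
      apply/mapP; exists (x, y) => //; rewrite mem_filter nxy /=.
      by apply/allpairsP; exists (x, y); rewrite !mem_undup.
    move=> x; rewrite VV => xV c cc.
    apply: (H2 (TVar x, TCst c)); apply/mapP; exists (x, c) => //.
    by apply/allpairsP; exists (x, c); rewrite mem_undup.
  case=> hi ha; apply/andP; split; apply/allP => p /mapP[[x y]].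
    rewrite mem_filter => /andP[/= nxy /allpairsP[[u v] /= [uV vV [ex ey]]]] -> /=.
    subst; apply: contra nxy => /eqP E; apply/eqP; apply: hi => //; by rewrite VV -mem_undup.
  move=> /allpairsP[[u v] /= [uV vV [ex ey]]] -> /=; subst.
  by apply: ha => //; rewrite VV -mem_undup.
- by move=> x; rewrite VV => /mem_Vat.
- move=> c; rewrite /csts mem_undup mem_cat => /orP[].
    case/flatten_mapP => a aq /flatten_mapP[t ta]; rewrite mem_tcsts => /eqP et.
    by apply: (ca a); rewrite // -et.
  case/flatten_mapP => p pq; move: pq; rewrite /natoms /= mem_cat => /orP[] /mapP[[y z]].
    by move=> _ -> /=.
  by move=> /allpairsP[[u v] /= [uV vV [-> ->]]] -> /=; rewrite inE => /eqP ->.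
Qed.


Lemma sum_bool (T : Type) (b : pred T) (l : seq T) : \sum_(x <- l) (b x : nat) = count b l.
Proof. by elim: l => [|x l IH]; rewrite ?big_nil ?big_cons ?IH. Qed.

Lemma sum_undup_le (T : eqType) (F : T -> nat) (l : seq T) :
  \sum_(x <- undup l) F x <= \sum_(x <- l) F x.
Proof.
elim: l => [|x l IH] //=; rewrite big_cons; case: ifP => _.
  by rewrite (leq_trans IH) // leq_addl.
by rewrite big_cons leq_add2l.
Qed.

Lemma sum_mem_le (T : eqType) (F : T -> nat) (l : seq T) x :
  x \in l -> F x <= \sum_(y <- l) F y.
Proof.
elim: l => //= y l IH; rewrite inE big_cons => /orP[/eqP->|/IH H].
  exact: leq_addr.
exact: leq_trans H (leq_addl _ _).
Qed.

Lemma size_flatten_le (A B : Type) (f : A -> seq B) (g : A -> nat) l :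
  (forall x, size (f x) <= g x) -> size (flatten (map f l)) <= \sum_(x <- l) g x.
Proof.
move=> H; elim: l => [|x l IH]; rewrite ?big_nil ?big_cons //=.
by rewrite size_cat leq_add.
Qed.

Lemma count_partition (T U : eqType) (p : pred T) (f : T -> U) (s : seq T) (E : seq U) :
  uniq E -> (forall x, x \in s -> p x -> f x \in E) ->
  count p s = \sum_(S <- E) count (fun x => p x && (f x == S)) s.
Proof.
move=> uE; elim: s => [|x s IH] H /=; first by rewrite big1_seq.
rewrite big_split /= -IH; last by move=> y ys; apply: H; rewrite inE ys orbT.
suff -> : \sum_(i <- E) (p x && (f x == i) : nat) = p x by [].
case px: (p x) => /=; last by rewrite big1.
rewrite sum_bool (eq_count (a2 := pred1 (f x))); last by move=> S /=; rewrite eq_sym.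
by rewrite count_uniq_mem // (H x) // inE eqxx.
Qed.

Lemma count_one (T : eqType) (p : pred T) s : uniq s ->
  (forall x y, x \in s -> y \in s -> p x -> p y -> x = y) -> has p s -> count p s = 1.
Proof.
move=> us H /hasP[x xs px]; apply/anti_leq/andP; split; last first.
  by rewrite -has_count; apply/hasP; exists x.
rewrite -size_filter; apply: (@uniq_leq_size _ _ [:: x]).
  exact: filter_uniq.
move=> y; rewrite mem_filter => /andP[py ys]; rewrite inE (H y x) //.
Qed.

Lemma msup_image Qt S : msup Qt S ->
  exists2 q0, q0 \in Qt & exists h0, hom_db h0 q0 S /\ img h0 q0 = S.
Proof.
case=> [[q0 q0Q [h0 Hh]]] minS; exists q0 => //; exists h0; split => //.
move: (Hh); rewrite hom_dbE => /andP[sub g0].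
apply/eqP; apply/negPn/negP => ne.
apply: (minS (img h0 q0)); first by rewrite fproperEneq ne.
by exists q0 => //; exists h0; rewrite hom_dbE fsubset_refl.
Qed.

Lemma sum_const_seq (T : Type) (l : seq T) c : \sum_(x <- l) c = c * size l.
Proof. by elim: l => [|x l IH]; rewrite ?big_nil ?big_cons ?IH ?muln0 //= mulnS. Qed.

Lemma size_csts q : size (csts q) <= cq_size q.
Proof.
rewrite /csts (leq_trans (size_undup _)) // size_cat /cq_size leq_add //.
  apply: size_flatten_le => a; apply: leq_trans (leqnSn _).
  apply: leq_trans (size_flatten_le (g := fun _ => 1) _ _) _; first by case.
  by rewrite sum_const_seq mul1n.
rewrite -sum_const_seq; apply: (leq_trans (size_flatten_le (g := fun _ => 2) _ _)).
  by move=> [[x|c] [y|d]].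
by apply: leq_sum.
Qed.


Section Main.
Variable Qt : ucq.
Variable k : nat.
Definition sz := ucq_size Qt.
Definition cs := cU Qt.
Definition TP : seq term := map TVar (iota 0 sz) ++ map TCst cs.
Definition AP : seq ratom :=
  flatten [seq [seq (a.1, ts) | ts <- tuples TP (size a.2)] | a <- flatten (map ratoms Qt)].
Definition AL : seq (seq ratom) :=
  [seq atl <- tuples AP k | uniq atl && (\sum_(a <- atl) (size a.2).+1 <= sz)].
Definition U : seq cq := map (mkq cs) AL.
Definition Pq (q : cq) : Prop := exists h, good id h q /\ msup Qt (img h q).
Definition U' : seq cq := undup [seq q <- U | `[< Pq q >]].
Definition rel (q q' : cq) : Prop :=
  exists h h', [/\ good id h q, good id h' q' & img h q = img h' q'].
Definition fib (q : cq) (S : database) : Prop := exists h, good id h q /\ img h q = S.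
Definition Reps : seq cq :=
  [seq q <- U' | `[< forall q', q' \in U' -> index q' U' < index q U' -> ~ rel q' q >]].

Lemma AP_cst a c : a \in AP -> TCst c \in a.2 -> c \in cs.
Proof.
case/flatten_mapP => b _ /mapP[ts]; rewrite mem_tuples => /andP[_ /allP H] -> /= cts.
have Hc : TCst c \in TP by apply: H.
move: Hc; rewrite /TP mem_cat => /orP[] /mapP[x xin] //.
by case=> ->.
Qed.

Lemma shape_U q : q \in U -> shape cs q.
Proof.
case/mapP => atl; rewrite mem_filter mem_tuples => /and3P[/andP[ua _] _ /allP Ha] ->.
apply: shape_mkq => // a c aa; apply: AP_cst; exact: Ha.
Qed.

Lemma size_U q : q \in U -> size (ratoms q) = k.
Proof.
by case/mapP => atl; rewrite mem_filter mem_tuples => /and3P[_ /eqP sa _] ->.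
Qed.

Lemma U'U q : q \in U' -> q \in U.
Proof. by rewrite mem_undup mem_filter => /andP[]. Qed.

Lemma gf_inst q g h a : shape cs q -> {in cs, g =1 id} -> a \in ratoms q ->
  gf g (inst h a) = inst (fun x => g (h x)) a.
Proof.
move=> [_ oq _ _ _] gid aq; rewrite /gf /inst /= -map_comp; congr (_, _).
apply/eq_in_map => -[x|c] //= ca; rewrite gid //.
by have := allP (oq a aq) _ ca.
Qed.

Lemma rn_img q g h : shape cs q -> {in cs, g =1 id} ->
  rn g (img h q) = img (fun x => g (h x)) q.
Proof.
move=> sh gid; apply/fsetP => f; rewrite in_rn in_img; apply/mapP/mapP.
  case=> f'; rewrite in_img => /mapP[a aq ->] ->.
  by exists a => //; rewrite (@gf_inst q g h a sh gid aq).
case=> a aq ->; exists (inst h a); first by rewrite in_img map_f.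
by rewrite (@gf_inst q g h a sh gid aq).
Qed.

Lemma transfer_q q h1 h2 : shape cs q -> good id h1 q -> good id h2 q ->
  exists g g', [/\ cancel g g', cancel g' g, {in cs, g =1 id} &
                   img h2 q = rn g (img h1 q)].
Proof.
move=> sh g1 g2; have [i1 a1] := good_char sh g1; have [i2 a2] := good_char sh g2.
have [g [g' [K K' gid E]]] := transfer (uniq_vars q) i1 i2 a1 a2.
exists g, g'; split => //; rewrite rn_img //; apply: img_ext => x xV.
by rewrite E.
Qed.

Lemma good_comp q h g g' : shape cs q -> good id h q -> cancel g g' ->
  {in cs, g =1 id} -> good id (fun x => g (h x)) q.
Proof.
move=> sh gh K gid; have [hi ha] := good_char sh gh.
apply: (good_of sh).
  by move=> x y xV yV /(can_inj K) /hi; apply.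
move=> x xV; apply/negP => gc; move: (ha x xV).
by rewrite -(K (h x)) -(gid _ gc) K gc.
Qed.

Lemma rel_transfer q q' h h' h2 : shape cs q -> shape cs q' ->
  good id h q -> good id h' q' -> img h q = img h' q' -> good id h2 q ->
  exists h2', good id h2' q' /\ img h2' q' = img h2 q.
Proof.
move=> sh sh' gh gh' E g2.
have [g [g' [K K' gid E2]]] := transfer_q sh gh g2.
exists (fun x => g (h' x)); split; first exact: good_comp.
by rewrite E2 E rn_img.
Qed.

Lemma fib_msup q S : q \in U' -> fib q S -> msup Qt S /\ #|` S| = k.
Proof.
move=> qU [h [gh <-]]; have qU0 := U'U qU; have sh := shape_U qU0.
split; last by rewrite (card_img sh gh) size_U.
move: qU; rewrite mem_undup mem_filter => /andP[/asboolP [h1 [g1 m1]] _].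
have [g [g' [K K' gid ->]]] := transfer_q sh g1 gh.
exact: (msup_rn K K').
Qed.

Lemma exists_shape S : msup Qt S -> #|` S| = k -> exists2 q, q \in U' & fib q S.
Proof.
move=> mS cS; have [q0 q0Q [h0 [Hh i0]]] := msup_image mS.
set fs := enum_fset S.
have fsS : forall f, (f \in fs) = (f \in S) by [].
have bnd : \sum_(f <- fs) (size f.2).+1 <= sz.
  have P : perm_eq fs (undup (map (inst h0) (ratoms q0))).
    apply: uniq_perm; [exact: fset_uniq | exact: undup_uniq|].
    by move=> f; rewrite fsS mem_undup -i0 in_img.
  rewrite (perm_big _ P); apply: leq_trans (sum_undup_le _ _) _.
  rewrite big_map; apply: leq_trans (sum_mem_le cq_size q0Q).
  by rewrite /cq_size; apply: leq_trans (leq_addr _ _); rewrite /inst /=; under eq_bigr do rewrite size_map.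
set Lst := undup [seq n <- flatten (map snd fs) | n \notin cs].
have uL : uniq Lst by apply: undup_uniq.
set abs := fun n => if n \in cs then TCst n else TVar (index n Lst).
set atf := fun f : fact => ((f.1, map abs f.2) : ratom).
set atl := map atf fs.
set hS := fun x => nth 0 Lst x.
have instK : forall f, f \in fs -> inst hS (atf f) = f.
  move=> [r ns] fin; rewrite /inst /atf /= -map_comp; congr (_, _).
  rewrite -[RHS]map_id; apply/eq_in_map => n nin /=.
  rewrite /abs; case: ifP => //= nc; rewrite /hS nth_index //.
  rewrite mem_undup mem_filter nc /=; apply/flatten_mapP; exists (r, ns) => //.
have sL : size Lst <= sz.
  apply: leq_trans (size_undup _) _; rewrite size_filter.
  apply: leq_trans (count_size _ _) _; apply: leq_trans bnd.
  by apply: size_flatten_le => f; apply: leqnSn.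
have atl_AL : atl \in AL.
  rewrite mem_filter mem_tuples size_map -cS eqxx /=; apply/andP; split; [apply/andP; split|].
  - rewrite map_inj_in_uniq ?fset_uniq // => f1 f2 f1s f2s E.
    by rewrite -(instK f1 f1s) E instK.
  - by rewrite big_map; under eq_bigr do rewrite size_map.
  - apply/allP => a /mapP[f fin ->].
    have : f \in img h0 q0 by rewrite i0.
    rewrite in_img => /mapP[a0 a0q ef].
    apply/flatten_mapP; exists a0; first by apply/flatten_mapP; exists q0.
    apply/mapP; exists (map abs f.2); last by rewrite /atf; subst f.
    rewrite mem_tuples size_map; subst f; rewrite size_map eqxx /=.
    apply/allP => t /mapP[n nin ->]; rewrite /abs; case: ifP => nc.
      by change (TCst n \in TP); rewrite /TP mem_cat map_f ?orbT.
    change (TVar (index n Lst) \in TP); rewrite /TP mem_cat map_f // mem_iota add0n.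
    apply: leq_trans sL; rewrite index_mem mem_undup mem_filter nc /=.
    by apply/flatten_mapP; exists (inst h0 a0).
set qS := mkq cs atl.
have qU : qS \in U by apply: map_f.
have sh := shape_U qU.
have vS : forall x, x \in vars qS -> x < size Lst.
  move=> x; rewrite vars_mkq => /mem_Vat [a /mapP[f fin ->] /mapP[n nin]].
  rewrite /abs; case: ifP => // nc [->]; rewrite index_mem mem_undup mem_filter nc /=.
  by apply/flatten_mapP; exists f.
have ghS : good id hS qS.
  apply: (good_of sh).
    move=> x y /vS xL /vS yL /eqP; rewrite /hS nth_uniq // => /eqP //.
  move=> x /vS xL; have : hS x \in Lst by apply: mem_nth.
  by rewrite mem_undup mem_filter => /andP[].
have iS : img hS qS = S.
  apply/fsetP => f; rewrite in_img /ratoms /qS /mkq /= -map_comp.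
  have -> : map (inst hS \o atf) fs = fs.
    by rewrite -[RHS]map_id; apply/eq_in_map => g gin /=; apply: instK.
  by [].
exists qS; last by exists hS.
rewrite mem_undup mem_filter qU andbT; apply/asboolP; exists hS; split => //.
by rewrite iS.
Qed.

Lemma reps_one S : msup Qt S -> #|` S| = k -> count (fun q => `[< fib q S >]) Reps = 1.
Proof.
move=> mS cS.
have uU : uniq U' by apply: undup_uniq.
have RU : forall q, q \in Reps -> q \in U' by move=> q; rewrite mem_filter => /andP[].
have Rc : forall q, q \in Reps -> forall q', q' \in U' -> index q' U' < index q U' -> ~ rel q' q.
  by move=> q; rewrite mem_filter => /andP[/asboolP].
apply: count_one; first by apply: filter_uniq.
  move=> x y xR yR /asboolP [hx [gx ix]] /asboolP [hy [gy iy]].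
  have rxy : rel x y by exists hx, hy; rewrite ix iy.
  have ryx : rel y x by exists hy, hx; rewrite ix iy.
  case: (ltngtP (index x U') (index y U')) => H.
  - by case: (Rc y yR x (RU x xR) H).
  - by case: (Rc x xR y (RU y yR) H).
  - by rewrite -(nth_index x (RU x xR)) H nth_index // RU.
have [qS qSU fS] := exists_shape mS cS.
have ex : exists i, (i < size U') && `[< fib (nth qS U' i) S >].
  by exists (index qS U'); rewrite index_mem qSU nth_index //=; apply/asboolP.
case: (ex_minnP ex) => i /andP[iU /asboolP fi] mini.
apply/hasP; exists (nth qS U' i); last by apply/asboolP.
rewrite mem_filter mem_nth // andbT; apply/asboolP => q' q'U; rewrite index_uniq // => lt [h' [h [g' g ih]]].
have shq := shape_U (U'U (mem_nth qS iU)); have shq' := shape_U (U'U q'U).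
case: fi => hq [gq iq].
have [h2 [g2 i2]] := rel_transfer shq shq' g g' (esym ih) gq.
have : i <= index q' U'.
  by apply: mini; rewrite index_mem q'U nth_index //=; apply/asboolP; exists h2; rewrite i2 iq.
by rewrite leqNgt lt.
Qed.

Lemma reps_zero S : ~ (msup Qt S /\ #|` S| = k) -> count (fun q => `[< fib q S >]) Reps = 0.
Proof.
move=> H; apply/eqP; rewrite -leqn0 leqNgt -has_count; apply/hasP => -[q qR /asboolP fq].
apply: H; apply: fib_msup fq; move: qR; by rewrite mem_filter => /andP[].
Qed.

End Main.


Section Final.
Variable Qt : ucq.
Variable k : nat.

Lemma size_cs : size (cs Qt) <= sz Qt.
Proof. by apply: size_flatten_le; apply: size_csts. Qed.

Lemma size_bound q : q \in U Qt k -> cq_size q <= 7 * (sz Qt).+1 ^ 2.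
Proof.
case/mapP => atl; rewrite mem_filter mem_tuples => /andP[/andP[_ Hs] /andP[_ /allP Ha]] ->.
set V := undup (Vat atl).
have sV : size V <= sz Qt.
  rewrite -(size_iota 0 (sz Qt)); apply: uniq_leq_size; first exact: undup_uniq.
  move=> x; rewrite mem_undup => /mem_Vat [a aa xa].
  have /flatten_mapP [b _ /mapP[ts]] := Ha a aa.
  rewrite mem_tuples => /andP[_ /allP Hts] ea; rewrite ea /= in xa.
  have : TVar x \in TP Qt by apply: Hts.
  by rewrite /TP mem_cat => /orP[] /mapP[y yin] // [->].
have sN : size (natoms (mkq (cs Qt) atl)) <= sz Qt * sz Qt + sz Qt * sz Qt.
  rewrite /natoms /mkq /= size_cat !size_map leq_add //.
    rewrite size_filter; apply: leq_trans (count_size _ _) _.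
    by rewrite size_allpairs leq_mul.
  by rewrite size_allpairs leq_mul // size_cs.
rewrite /cq_size /ratoms /=.
move: Hs sN; set a := \sum_(_ <- _) _; set n := size _; set s := sz Qt => H1 H2.
nia.
Qed.

Lemma FMS_count D :
  FMS Qt k D = count (fun S => `[< min_support Qt D S >] && (#|` S| == k))
                     (enum_fset (fpowerset D)).
Proof.
rewrite /FMS -size_filter -(undup_id (filter_uniq _ (fset_uniq _))) -card_fseq.
congr (size (enum_fset _)); apply/fsetP => S.
by rewrite !inE mem_filter andbC.
Qed.

Lemma pk_count D S : S \in fpowerset D ->
  (`[< min_support Qt D S >] && (#|` S| == k) : nat) =
  count (fun q => `[< fib q S >]) (Reps Qt k).
Proof.
rewrite fpowersetE => SD.
have E : min_support Qt D S <-> msup Qt S.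
  split; first by case.
  by case=> m1 m2; split.
case: (boolP (`[< min_support Qt D S >] && (#|` S| == k))).
  by case/andP => /asboolP /E mS /eqP cS; rewrite (reps_one mS cS).
move=> H; rewrite reps_zero //; case=> mS cS; move/negP: H; apply.
by rewrite cS eqxx andbT; apply/asboolP/E.
Qed.

Lemma hom_count_fib D q : q \in Reps Qt k ->
  hom_count q D = aut_count q * \sum_(S <- enum_fset (fpowerset D)) `[< fib q S >].
Proof.
move=> qR.
have qU : q \in U Qt k by apply: U'U; move: qR; rewrite mem_filter => /andP[].
have sh := shape_U qU.
rewrite /hom_count (count_partition (f := fun l => img (of_list 0 q l) q) (E := enum_fset (fpowerset D))); last first.
  - move=> l _; rewrite hom_dbE => /andP[sub _]; by rewrite fpowersetE.
  - exact: fset_uniq.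
rewrite big_distrr; apply: eq_big_seq => S; rewrite fpowersetE => SD /=.
case: (boolP `[< fib q S >]) => [/asboolP [h [gh ih]]|nf].
  by rewrite muln1; apply: (fiber_count sh gh ih SD).
rewrite muln0; apply/eqP; rewrite -leqn0 leqNgt -has_count; apply/hasP => -[l _].
case/andP; rewrite hom_dbE => /andP[_ gl] /eqP il.
by move/negP: nf; apply; apply/asboolP; exists (of_list 0 q l).
Qed.

End Final.

Import GRing.Theory Num.Theory.
Local Open Scope ring_scope.

Theorem theorem2 :
  exists C : nat,
  forall (Qt : ucq) (k : nat),
  exists Qs : seq cq,
    [/\ uniq Qs,
        (forall q, q \in Qs -> [/\ safe q, (0 < aut_count q)%N &
                                 (cq_size q <= C * (ucq_size Qt).+1 ^ 2)%N]) &
        forall D : database,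
          (FMS Qt k D)%:R =
          \sum_(q <- Qs) ((hom_count q D)%:R / (aut_count q)%:R : rat)].
Proof.
exists 7%N => Qt k; exists (Reps Qt k); split.
- exact/filter_uniq/undup_uniq.
- move=> q qR.
  have qU : q \in U Qt k by apply: U'U; move: qR; rewrite mem_filter => /andP[].
  have sh := shape_U qU.
  split; [|exact: aut_pos sh|exact: (size_bound qU)].
  case: sh => _ _ _ saf _; apply/allP => x xV; have [a aq xa] := saf x xV.
  apply/flatten_mapP; exists a => //; apply/flatten_mapP; exists (TVar x) => //.
  by rewrite mem_tvars.
- move=> D.
  rewrite FMS_count -sum_bool.
  rewrite (eq_big_seq (fun S => \sum_(q <- Reps Qt k) (`[< fib q S >] : nat))); last first.
    by move=> S SE; rewrite /= pk_count // sum_bool.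
  rewrite exchange_big natr_sum; apply: eq_big_seq => q qR.
  have qU : q \in U Qt k by apply: U'U; move: qR; rewrite mem_filter => /andP[].
  rewrite (hom_count_fib D qR) natrM [X in _ = X / _]mulrC mulfK // pnatr_eq0 -lt0n.
  exact: aut_pos (shape_U qU).
Qed.
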